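(* Let $d\ge2$, let $A,B$ be $d$-dimensional systems, and let $\rho_{AB}=\dfrac{\mathbb I_{AB}+\beta W}{d^2+d\beta}$ with $\beta\in\mathbb R$, $|\beta|\le1$, where $W=\sum_{i,j}|i\rangle\langle j|\otimes|j\rangle\langle i|$ is the swap operator (a Werner state). Then $$Q^A_{\mathcal N}(\rho_{AB})=Q^{AB}_{\mathcal N}(\rho_{AB})=\frac{|\beta|(d-1)}{2(d+\beta)}.$$
   Context: The negativity of a bipartite state $\tau_{X:Y}$ is $\mathcal N_{X:Y}(\tau)=(\|\tau^\Gamma\|_1-1)/2$ with $\tau^\Gamma$ the partial transpose on one party and $\|\cdot\|_1$ the trace norm. For a system $S$ of dimension $m$ with orthonormal basis $\{|s_k\rangle\}$, the measurement interaction is the isometry $V_S:S\to S\otimes S'$ ($S'$ $m$-dimensional with computational basis $\{|k\rangle\}$), $V_S|s_k\rangle=|s_k\rangle|k\rangle$. One-sided negativity of quantumness: $Q^A_{\mathcal N}(\rho_{AB})=\min\mathcal N_{AB:A'}\big((V_A\otimes\mathbb I_B)\rho_{AB}(V_A\otimes\mathbb I_B)^\dagger\big)$ over orthonormal bases of $A$. Two-sided: $Q^{AB}_{\mathcal N}(\rho_{AB})=\min\mathcal N_{AB:A'B'}\big((V_A\otimes V_B)\rho_{AB}(V_A\otimes V_B)^\dagger\big)$ over orthonormal bases of $A$ and $B$. *)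

(* Defs.v *)
From HB Require Import structures.
From mathcomp Require Import all_boot all_order all_algebra.
From mathcomp Require Import sesquilinear spectral.
Set Implicit Arguments. Unset Strict Implicit. Unset Printing Implicit Defensive.
Import Order.TTheory GRing.Theory Num.Theory.
Local Open Scope ring_scope.
Local Open Scope sesquilinear_scope.

Section QDefs.
Variable C : numClosedFieldType.

(* A linear map from the space with basis U to the space with basis T,
   given by its matrix entries <t| M |u>, with T U finite index types. *)
Definition op (T U : finType) := T -> U -> C.

Definition mulop (T U V : finType) (M : op T U) (N : op U V) : op T V :=
  fun x z => \sum_(y : U) M x y * N y z.

Definition adjop (T U : finType) (M : op T U) : op U T :=
  fun x y => (M y x)^*.

Definition mx_of_op (T : finType) (M : op T T) : 'M[C]_#|T| :=
  \matrix_(i, j) M (enum_val i) (enum_val j).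

(* trace norm ||M||_1 = Tr sqrt(M^dagger M) = sum of the square roots of the
   eigenvalues of the (Hermitian, psd) matrix M^dagger M *)
Definition trnorm (T : finType) (M : op T T) : C :=
  let X := mx_of_op M in
  \sum_i sqrtC (spectral_diag (X^t* *m X) 0 i).

Definition ptrans (X Y : finType) (M : op (X * Y)%type (X * Y)%type)
  : op (X * Y)%type (X * Y)%type :=
  fun r c => M (r.1, c.2) (c.1, r.2).

Definition negativity (X Y : finType) (tau : op (X * Y)%type (X * Y)%type) : C :=
  (trnorm (ptrans tau) - 1) / 2.

(* An orthonormal basis {|s_k>} of C^m is encoded by a unitary matrix U
   (U *m U^t* = 1) whose k-th row is |s_k>, i.e. <i|s_k> = U k i.
   Measurement isometry V_S : S -> S (x) S',  V_S |s_k> = |s_k>|k>,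
   i.e. V_S = sum_k |s_k>|k> <s_k| ; entry <(i,k)| V_S |j>. *)
Definition measV (m : nat) (U : 'M[C]_m) : op ('I_m * 'I_m)%type 'I_m :=
  fun p j => U p.2 p.1 * (U p.2 j)^*.

(* V_A (x) I_B : A x B -> (A x B) x A'   (ordered as AB : A') *)
Definition VA_IB (d : nat) (U : 'M[C]_d)
  : op (('I_d * 'I_d) * 'I_d)%type ('I_d * 'I_d)%type :=
  fun r c => measV U (r.1.1, r.2) c.1 * (r.1.2 == c.2)%:R.

(* V_A (x) V_B : A x B -> (A x B) x (A' x B')   (ordered as AB : A'B') *)
Definition VA_VB (d : nat) (U U' : 'M[C]_d)
  : op (('I_d * 'I_d) * ('I_d * 'I_d))%type ('I_d * 'I_d)%type :=
  fun r c => measV U (r.1.1, r.2.1) c.1 * measV U' (r.1.2, r.2.2) c.2.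

Definition conjop (T U : finType) (V : op T U) (rho : op U U) : op T T :=
  mulop V (mulop rho (adjop V)).

Definition is_min_over_unitaries (d : nat) (f : 'M[C]_d -> C) (q : C) : Prop :=
  (exists2 U : 'M[C]_d, U \is unitarymx & f U = q) /\
  (forall U : 'M[C]_d, U \is unitarymx -> q <= f U).

Definition is_min_over_unitaries2 (d : nat) (f : 'M[C]_d -> 'M[C]_d -> C)
  (q : C) : Prop :=
  (exists U U' : 'M[C]_d, [/\ U \is unitarymx, U' \is unitarymx & f U U' = q]) /\
  (forall U U' : 'M[C]_d, U \is unitarymx -> U' \is unitarymx -> q <= f U U').

Definition QA_N_eq (d : nat) (rho : op ('I_d * 'I_d)%type ('I_d * 'I_d)%type)
  (q : C) : Prop :=
  is_min_over_unitaries (fun U => negativity (conjop (VA_IB U) rho)) q.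

Definition QAB_N_eq (d : nat) (rho : op ('I_d * 'I_d)%type ('I_d * 'I_d)%type)
  (q : C) : Prop :=
  is_min_over_unitaries2 (fun U U' => negativity (conjop (VA_VB U U') rho)) q.

Definition swapop (d : nat) : op ('I_d * 'I_d)%type ('I_d * 'I_d)%type :=
  fun r c => ((r.1 == c.2) && (r.2 == c.1))%:R.

Definition werner (d : nat) (beta : C) : op ('I_d * 'I_d)%type ('I_d * 'I_d)%type :=
  fun r c => ((r == c)%:R + beta * swapop r c) / (d%:R ^+ 2 + d%:R * beta).

End QDefs.

Arguments werner {C} d beta.

(* Main.v *)
Require Import Defs.
From HB Require Import structures.
From mathcomp Require Import all_boot all_order all_algebra.
From mathcomp Require Import sesquilinear spectral.
From mathcomp Require Import ring.
Import Order.TTheory GRing.Theory Num.Theory.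
Local Open Scope ring_scope.
Local Open Scope sesquilinear_scope.

Section TN.
Variable C : numClosedFieldType.

Lemma cs_sum n (u v : 'I_n -> C) :
  `|\sum_j u j * v j| <= sqrtC (\sum_j `|u j| ^+ 2) * sqrtC (\sum_j `|v j| ^+ 2).
Proof.
pose x : 'rV[C]_n := \row_j u j.
pose y : 'rV[C]_n := \row_j (v j)^*.
have H : `|dotmx x y| <= sqrtC (dotmx x x) * sqrtC (dotmx y y) :=
  (CauchySchwarz_sqrt (@dotmx C n) x y).1.
rewrite !dotmxE in H.
have E : forall w : 'rV[C]_n, (w *m w ^t*) 0 0 = \sum_j `|w 0 j| ^+ 2.
  by move=> w; rewrite !mxE; apply: eq_bigr => j _; rewrite !mxE normCK.
rewrite !E in H.
move: H; rewrite !mxE.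
under eq_bigr do rewrite !mxE conjCK.
under [X in sqrtC X * _]eq_bigr do rewrite mxE.
by under [X in _ * sqrtC X]eq_bigr do rewrite mxE norm_conjC.
Qed.


Lemma rowsq m n (M : 'M[C]_(m, n)) i : (M *m M ^t*) i i = \sum_j `|M i j| ^+ 2.
Proof. by rewrite !mxE; apply: eq_bigr => j _; rewrite !mxE normCK. Qed.

Lemma colsq m n (M : 'M[C]_(m, n)) i : (M ^t* *m M) i i = \sum_j `|M j i| ^+ 2.
Proof. by rewrite !mxE; apply: eq_bigr => j _; rewrite !mxE normCK mulrC. Qed.

Section Spec.
Variables (n : nat) (X : 'M[C]_n).
Let G := X ^t* *m X.
Let P := spectralmx G.
Let D := spectral_diag G.

Lemma G_normal : G \is normalmx.
Proof.
apply/normalmxP.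
have -> : G ^t* = G.
  by rewrite /G !trmx_mul !map_mxM trmxCK.
by [].
Qed.

Lemma PPt : P *m P ^t* = 1%:M.
Proof. by apply/unitarymxP; apply: spectral_unitarymx. Qed.

Lemma PtP : P ^t* *m P = 1%:M.
Proof.
have : P ^t* \is unitarymx by rewrite trmxC_unitary spectral_unitarymx.
by move/unitarymxP; rewrite trmxCK.
Qed.

Lemma G_eq : G = P ^t* *m diag_mx D *m P.
Proof.
have := orthomx_spectralP G_normal.
by rewrite -invmx_unitary ?spectral_unitarymx.
Qed.

Let Y := X *m P ^t*.

Lemma YtY : Y ^t* *m Y = diag_mx D.
Proof.
rewrite /Y !trmx_mul !map_mxM trmxCK !mulmxA -(mulmxA P) -/G G_eq.
by rewrite !mulmxA PPt mul1mx -mulmxA PPt mulmx1.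
Qed.

Lemma D_eq i : D 0 i = \sum_j `|Y j i| ^+ 2.
Proof. by rewrite -colsq YtY mxE eqxx mulr1n. Qed.

Lemma D_ge0 i : 0 <= D 0 i.
Proof. by rewrite D_eq; apply: sumr_ge0 => j _; rewrite exprn_ge0. Qed.

Lemma trnorm_lower (Z : 'M[C]_n) : Z *m Z ^t* = 1%:M ->
  `|\tr (Z *m X)| <= \sum_i sqrtC (D 0 i).
Proof.
move=> ZU.
have -> : \tr (Z *m X) = \tr (P *m Z *m Y).
  rewrite /Y [RHS]mxtrace_mulC !mulmxA -(mulmxA X) PtP mulmx1.
  exact: mxtrace_mulC.
pose W := P *m Z.
have WU : W *m W ^t* = 1%:M.
  by rewrite /W trmx_mul map_mxM mulmxA -(mulmxA P) ZU mulmx1 PPt.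
rewrite -/W /mxtrace.
apply: le_trans; first exact: ler_norm_sum.
apply: ler_sum => i _.
rewrite mxE.
apply: le_trans; first exact: cs_sum.
rewrite -rowsq WU mxE eqxx mulr1n sqrtC1 mul1r.
by rewrite D_eq.
Qed.

Lemma trnorm_upper : \sum_i sqrtC (D 0 i) <= \sum_j sqrtC (G j j).
Proof.
have colP : forall j, \sum_i `|P i j| ^+ 2 = 1.
  by move=> j; rewrite -colsq PtP mxE eqxx.
have rowP : forall i, \sum_j `|P i j| ^+ 2 = 1.
  by move=> i; rewrite -rowsq PPt mxE eqxx.
have Gjj : forall j, G j j = \sum_i `|P i j| ^+ 2 * D 0 i.
  move=> j; rewrite G_eq mul_mx_diag mxE; apply: eq_bigr => i _.
  by rewrite !mxE normCK mulrC mulrA.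
have step : forall j, \sum_i `|P i j| ^+ 2 * sqrtC (D 0 i) <= sqrtC (G j j).
  move=> j.
  have := @cs_sum n (fun i => `|P i j|) (fun i => `|P i j| * sqrtC (D 0 i)).
  have -> : \sum_i `|P i j| * (`|P i j| * sqrtC (D 0 i)) =
            \sum_i `|P i j| ^+ 2 * sqrtC (D 0 i).
    by apply: eq_bigr => i _; rewrite mulrA expr2.
  rewrite ger0_norm; last first.
    by apply: sumr_ge0 => i _; rewrite mulr_ge0 ?exprn_ge0 ?sqrtC_ge0 ?D_ge0.
  move/le_trans; apply.
  under eq_bigr do rewrite normr_id.
  rewrite colP sqrtC1 mul1r Gjj le_eqVlt; apply/orP; left; apply/eqP; congr sqrtC.
  apply: eq_bigr => i _.
  rewrite normrM normr_id exprMn ger0_norm ?sqrtC_ge0 ?D_ge0 //.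
  by rewrite sqrtCK.
apply: le_trans (ler_sum _ (fun j _ => step j)).
rewrite exchange_big /= le_eqVlt; apply/orP; left; apply/eqP.
apply/eqP; rewrite eq_sym; apply/eqP.
by apply: eq_bigr => i _; rewrite -mulr_suml rowP mul1r.
Qed.

End Spec.


Section OpLevel.
Variable T : finType.

Lemma sum_ev (F : T -> C) : \sum_(i < #|T|) F (enum_val i) = \sum_x F x.
Proof. by rewrite -big_enum_val. Qed.

Lemma trnorm_op_lower (X Z : op C T T) :
  (forall c c', \sum_r Z c r * (Z c' r)^* = (c == c')%:R) ->
  `|\sum_c \sum_r Z c r * X r c| <= trnorm X.
Proof.
move=> ZU.
pose Zm := mx_of_op Z.
have ZmU : Zm *m Zm ^t* = 1%:M.
  apply/matrixP => i j; rewrite !mxE.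
  under eq_bigr do rewrite !mxE.
  rewrite (sum_ev (fun r => Z (enum_val i) r * (Z (enum_val j) r)^*)) ZU.
  by rewrite (inj_eq enum_val_inj).
have := trnorm_lower _ (mx_of_op X) _ ZmU.
rewrite /trnorm /=.
suff -> : \tr (Zm *m mx_of_op X) = \sum_c \sum_r Z c r * X r c by [].
rewrite /mxtrace.
under eq_bigr do rewrite mxE.
under eq_bigr do under eq_bigr do rewrite !mxE.
rewrite -(sum_ev (fun c => \sum_r Z c r * X r c)).
apply: eq_bigr => i _.
by rewrite (sum_ev (fun r => Z (enum_val i) r * X r (enum_val i))).
Qed.

Lemma trnorm_op_upper (X : op C T T) :
  trnorm X <= \sum_c sqrtC (\sum_r `|X r c| ^+ 2).
Proof.
have := trnorm_upper _ (mx_of_op X).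
rewrite /trnorm /= => /le_trans; apply.
rewrite -(sum_ev (fun c => sqrtC (\sum_r `|X r c| ^+ 2))).
rewrite le_eqVlt; apply/orP; left; apply/eqP.
apply: eq_bigr => j _; rewrite colsq.
congr sqrtC.
under eq_bigr do rewrite mxE.
by rewrite (sum_ev (fun r => `|X r (enum_val j)| ^+ 2)).
Qed.


Lemma sum_delta (F : T -> C) b : \sum_a F a * (a == b)%:R = F b.
Proof.
rewrite (bigD1 b) //= eqxx mulr1 big1 ?addr0 // => a /negPf ->.
by rewrite mulr0.
Qed.

Lemma sum_delta' (F : T -> C) b : \sum_a (b == a)%:R * F a = F b.
Proof.
rewrite -[RHS](sum_delta F b); apply: eq_bigr => a _.
by rewrite eq_sym mulrC.
Qed.

Lemma sum_deltaL (F : T -> C) b : \sum_a (a == b)%:R * F a = F b.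
Proof.
rewrite -[RHS](sum_delta F b); apply: eq_bigr => a _.
by rewrite mulrC.
Qed.

Lemma struct_lower (X : op C T T) (f g : T -> T -> C) (y : T -> C) :
  (forall a b, \sum_r f a r * (f b r)^* = (a == b)%:R) ->
  (forall a b, \sum_r g a r * (g b r)^* = (a == b)%:R) ->
  (forall r c, \sum_a g a r * (g a c)^* = (r == c)%:R) ->
  (forall r c, X r c = \sum_a f a r * y a * (g a c)^*) ->
  \sum_a `|y a| <= trnorm X.
Proof.
move=> fON gON gCP Xe.
pose ph a := if y a == 0 then 1 else `|y a| / y a.
have phy a : ph a * y a = `|y a|.
  rewrite /ph; case: eqP => [->|/eqP ya]; first by rewrite normr0 mulr0.
  by rewrite divfK.
have phn a : ph a * (ph a)^* = 1.
  rewrite /ph; case: eqP => [_|/eqP ya]; first by rewrite conjC1 mulr1.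
  rewrite -normCK normf_div normr_id divff ?expr1n //.
  by rewrite normr_eq0.
pose Z c r := \sum_a ph a * g a c * (f a r)^*.
have ZU : forall c c', \sum_r Z c r * (Z c' r)^* = (c == c')%:R.
  move=> c c'; rewrite -gCP.
  transitivity (\sum_r \sum_a \sum_b
     (ph a * g a c * (ph b * g b c')^*) * ((f a r)^* * f b r)).
    apply: eq_bigr => r _; rewrite /Z rmorph_sum mulr_suml.
    apply: eq_bigr => a _; rewrite mulr_sumr; apply: eq_bigr => b _.
    by rewrite !rmorphM /= conjCK; ring.
  rewrite exchange_big; apply: eq_bigr => a _.
  rewrite exchange_big /=.
  transitivity (\sum_b (ph a * g a c * (ph b * g b c')^*) * (b == a)%:R).
    apply: eq_bigr => b _; rewrite -mulr_sumr; congr (_ * _).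
    by rewrite -fON; apply: eq_bigr => r _; rewrite mulrC.
  rewrite sum_delta !rmorphM /=.
  have := phn a; move=> H.
  transitivity (ph a * (ph a)^* * (g a c * (g a c')^*)); first by ring.
  by rewrite H mul1r.
have := trnorm_op_lower X Z ZU.
suff -> : \sum_c \sum_r Z c r * X r c = \sum_a `|y a|.
  by rewrite ger0_norm // sumr_ge0.
transitivity (\sum_c \sum_a \sum_b \sum_r
   (ph a * g a c * y b * (g b c)^*) * ((f a r)^* * f b r)).
  apply: eq_bigr => c _.
  transitivity (\sum_r \sum_a \sum_b
     (ph a * g a c * y b * (g b c)^*) * ((f a r)^* * f b r)).
    apply: eq_bigr => r _; rewrite /Z Xe mulr_suml.
    apply: eq_bigr => a _; rewrite mulr_sumr; apply: eq_bigr => b _.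
    by ring.
  rewrite exchange_big; apply: eq_bigr => a _ /=.
  by rewrite exchange_big.
transitivity (\sum_c \sum_a (ph a * y a) * (g a c * (g a c)^*)).
  apply: eq_bigr => c _; apply: eq_bigr => a _.
  transitivity (\sum_b (ph a * g a c * y b * (g b c)^*) * (b == a)%:R).
    apply: eq_bigr => b _; rewrite -mulr_sumr; congr (_ * _).
    by rewrite -fON; apply: eq_bigr => r _; rewrite mulrC.
  by rewrite sum_delta; ring.
rewrite exchange_big; apply: eq_bigr => a _ /=.
by rewrite -mulr_sumr gON eqxx mulr1 phy.
Qed.

Lemma struct_upper (X : op C T T) (p : T -> T) (y : T -> C) :
  (forall a, p (p a) = a) ->
  (forall r c, X r c = y r * (p r == c)%:R) ->
  trnorm X <= \sum_a `|y a|.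
Proof.
move=> pp Xe.
apply: le_trans (trnorm_op_upper X) _.
rewrite le_eqVlt; apply/orP; left; apply/eqP.
transitivity (\sum_c `|y (p c)|).
  apply: eq_bigr => c _.
  transitivity (sqrtC (\sum_r `|y (p c)| ^+ 2 * (r == p c)%:R)).
    congr sqrtC; apply: eq_bigr => r _; rewrite Xe normrM.
    have [->|ne] := eqVneq r (p c); first by rewrite pp !eqxx /= normr1 !mulr1.
    have -> : (p r == c) = false.
      by apply/negP => /eqP E; move: ne; rewrite -E pp eqxx.
    by rewrite normr0 mulr0 expr0n /= mulr0.
  by rewrite sum_delta sqrCK.
by rewrite [RHS](reindex_inj (can_inj pp)).
Qed.

Lemma comp_ON (f : T -> T -> C) (p : T -> T) :
  (forall a, p (p a) = a) ->
  (forall a b, \sum_r f a r * (f b r)^* = (a == b)%:R) ->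
  (forall a b, \sum_r f (p a) r * (f (p b) r)^* = (a == b)%:R).
Proof.
by move=> pp fON a b; rewrite fON (inj_eq (can_inj pp)).
Qed.

Lemma comp_CP (f : T -> T -> C) (p : T -> T) :
  (forall a, p (p a) = a) ->
  (forall r c, \sum_a f a r * (f a c)^* = (r == c)%:R) ->
  (forall r c, \sum_a f (p a) r * (f (p a) c)^* = (r == c)%:R).
Proof.
move=> pp fCP r c; rewrite -fCP.
by rewrite [RHS](reindex_inj (can_inj pp)).
Qed.

Lemma sum_deltaR (F : T -> C) b : \sum_a F a * (b == a)%:R = F b.
Proof.
rewrite -[RHS](sum_delta F b); apply: eq_bigr => a _.
by rewrite eq_sym.
Qed.

Lemma sum_ind (b : T) : \sum_a (b == a)%:R = 1 :> C.
Proof.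
rewrite -[RHS](sum_delta' (fun _ => 1) b); apply: eq_bigr => a _.
by rewrite mulr1.
Qed.

Lemma sum_dd (j j' : T) : \sum_k (j == k)%:R * (j' == k)%:R = (j' == j)%:R :> C.
Proof.
rewrite -[RHS](sum_delta' (fun k => (j' == k)%:R) j).
by [].
Qed.

End OpLevel.


Lemma sum_pair (I J : finType) (G : I * J -> C) :
  \sum_p G p = \sum_i \sum_j G (i, j).
Proof. by rewrite pair_bigA; apply: eq_bigr => -[i j]. Qed.

Lemma sum2_sep (I J : finType) (G : I * J -> C) K (P : I -> C) (Q : J -> C) :
  (forall i j, G (i, j) = K * P i * Q j) ->
  \sum_p G p = K * (\sum_i P i) * (\sum_j Q j).
Proof.
move=> HG; rewrite sum_pair -mulrA big_distrlr mulr_sumr.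
apply: eq_bigr => i _; rewrite mulr_sumr; apply: eq_bigr => j _.
by rewrite HG mulrA.
Qed.

Lemma natr_true : true%:R = 1 :> C. Proof. by []. Qed.
Lemma natr_false : false%:R = 0 :> C. Proof. by []. Qed.

Lemma sum3_sep (I J L : finType) (G : (I * J) * L -> C) K
  (P : I -> C) (Q : J -> C) (R : L -> C) :
  (forall i j l, G ((i, j), l) = K * P i * Q j * R l) ->
  \sum_p G p = K * (\sum_i P i) * (\sum_j Q j) * (\sum_l R l).
Proof.
move=> HG.
rewrite (@sum2_sep _ _ _ 1 (fun ij => K * P ij.1 * Q ij.2) R); last first.
  by move=> [i j] l; rewrite HG mul1r.
rewrite mul1r (@sum2_sep _ _ _ K P Q) //.
Qed.

Lemma sum_pair_ind (I J : finType) (i : I) (j : J) (c : C) :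
  \sum_p \sum_q ((i, j) == (p, q))%:R * c = c.
Proof.
transitivity (\sum_p (i == p)%:R * (\sum_q (j == q)%:R * c)).
  apply: eq_bigr => p _; rewrite mulr_sumr; apply: eq_bigr => q _.
  by rewrite xpair_eqE -mulnb natrM mulrA.
transitivity (\sum_p (i == p)%:R * c).
  by apply: eq_bigr => p _; rewrite (sum_delta' _ (fun _ => c)).
exact: (sum_delta' _ (fun _ => c)).
Qed.

Lemma natr_and (a b : bool) : (a && b)%:R = a%:R * b%:R :> C.
Proof. by rewrite -mulnb natrM. Qed.

Lemma pair_eqR (T1 T2 : eqType) (x1 y1 : T1) (x2 y2 : T2) :
  ((x1, x2) == (y1, y2))%:R = (x1 == y1)%:R * (x2 == y2)%:R :> C.
Proof. by rewrite xpair_eqE natr_and. Qed.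

Section Unit.
Variables (d : nat) (U : 'M[C]_d).
Hypothesis UU : U \is unitarymx.

Lemma uON k k' : \sum_x U k x * (U k' x)^* = (k == k')%:R.
Proof.
have /unitarymxP/matrixP/(_ k k') := UU.
by rewrite !mxE => <-; apply: eq_bigr => x _; rewrite !mxE.
Qed.

Lemma uCP a a' : \sum_k U k a * (U k a')^* = (a == a')%:R.
Proof.
have : U ^t* \is unitarymx by rewrite trmxC_unitary.
move/unitarymxP; rewrite trmxCK => /matrixP/(_ a a').
rewrite !mxE => E.
rewrite -[RHS]conjC_nat -E rmorph_sum; apply: eq_bigr => k _.
by rewrite !mxE rmorphM /= conjCK mulrC.
Qed.

End Unit.


Lemma wsum d (beta : C) x (F : 'I_d * 'I_d -> C) :
  \sum_y werner d beta x y * F y =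
  (F x + beta * F (x.2, x.1)) / (d%:R ^+ 2 + d%:R * beta).
Proof.
transitivity (\sum_y (((x == y)%:R * F y) / (d%:R ^+ 2 + d%:R * beta) +
   beta * (((x.2, x.1) == y)%:R * F y) / (d%:R ^+ 2 + d%:R * beta))).
  apply: eq_bigr => y _; rewrite /werner /swapop.
  have -> : ((x.1 == y.2) && (x.2 == y.1)) = ((x.2, x.1) == y).
    by case: y => y1 y2; rewrite xpair_eqE andbC.
  by ring.
rewrite big_split /= -!mulr_suml sum_delta'.
by rewrite -mulr_sumr sum_delta' mulrDl.
Qed.

Section OneSided.
Variables (d : nat) (beta : C) (U : 'M[C]_d).
Hypothesis UU : U \is unitarymx.
Let N := (d%:R ^+ 2 + d%:R * beta : C).

Lemma sigma1 a b k a' b' m :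
  conjop (VA_IB U) (werner d beta) ((a, b), k) ((a', b'), m) =
  U k a * (U m a')^* *
  (((k == m)%:R * (b == b')%:R + beta * ((U k b')^* * U m b)) / N).
Proof.
rewrite /conjop /mulop.
under eq_bigr => x _ do rewrite wsum.
rewrite /N.
transitivity ((\sum_x VA_IB U ((a, b), k) x * (VA_IB U ((a', b'), m) x)^* +
  beta * \sum_x VA_IB U ((a, b), k) x * (VA_IB U ((a', b'), m) (x.2, x.1))^*)
  / (d%:R ^+ 2 + d%:R * beta)).
  rewrite mulr_sumr -big_split big_distrl /=; apply: eq_bigr => x _.
  by rewrite /adjop; ring.
rewrite (@sum2_sep _ _ _ (U k a * (U m a')^*)
   (fun x1 => (U k x1)^* * U m x1)
   (fun x2 => (b == x2)%:R * (b' == x2)%:R)); last first.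
  move=> x1 x2; rewrite /VA_IB /measV /= !rmorphM /= conjCK conjC_nat; ring.
rewrite (@sum2_sep _ _ _ (U k a * (U m a')^*)
   (fun x1 => (U k x1)^* * (b' == x1)%:R)
   (fun x2 => (b == x2)%:R * U m x2)); last first.
  move=> x1 x2; rewrite /VA_IB /measV /= !rmorphM /= conjCK conjC_nat; ring.
have E1 : \sum_x1 (U k x1)^* * U m x1 = (k == m)%:R.
  by rewrite eq_sym -(uON _ _ UU); apply: eq_bigr => x _; rewrite mulrC.
rewrite E1 sum_delta' sum_delta' eq_sym.
have -> : \sum_x1 (U k x1)^* * (b' == x1)%:R = (U k b')^*.
  by rewrite -[RHS](sum_delta' _ (fun x => (U k x)^*) b'); apply: eq_bigr => x _; rewrite mulrC.
rewrite (eq_sym b' b); ring.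
Qed.


Definition f1 (al r : ('I_d * 'I_d) * 'I_d) : C :=
  U al.1.1 r.1.1 * U al.1.2 r.1.2 * (al.2 == r.2)%:R.
Definition pi1 (al : ('I_d * 'I_d) * 'I_d) : ('I_d * 'I_d) * 'I_d :=
  if al.1.2 == al.2 then ((al.1.2, al.1.1), al.1.1) else al.
Definition y1 (al : ('I_d * 'I_d) * 'I_d) : C :=
  ((al.1.1 == al.2)%:R + beta * (al.1.2 == al.2)%:R) / N.

Lemma term1 al r c : f1 al r * y1 al * (f1 (pi1 al) c)^* =
  ((al.1.1 == al.2)%:R * (f1 al r * (f1 al c)^*) +
   beta * ((al.1.2 == al.2)%:R * (f1 al r * (f1 ((al.2, al.1.1), al.1.1) c)^*))) / N.
Proof.
case: al => [[p q] j]; rewrite /pi1 /y1 /=.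
have [<-|hqj] := eqVneq q j.
  have [<-|hpq] := eqVneq p q; first by ring.
  by rewrite /= ?mulr0n ?mulr1n; ring.
by rewrite /= ?mulr0n ?mulr1n; ring.
Qed.

Lemma sumT1 (F : ('I_d * 'I_d) * 'I_d -> C) :
  \sum_al F al = \sum_p \sum_q \sum_j F ((p, q), j).
Proof. by rewrite sum_pair (sum_pair _ _ (fun pq => \sum_j F (pq, j))). Qed.

Lemma rep1 r c :
  ptrans (conjop (VA_IB U) (werner d beta)) r c =
  \sum_al f1 al r * y1 al * (f1 (pi1 al) c)^*.
Proof.
case: r => [[a b] k]; case: c => [[a' b'] k'].
rewrite /ptrans /= sigma1.
under eq_bigr do rewrite term1.
rewrite -big_distrl /= big_split /= -mulr_sumr.
rewrite !sumT1 /=.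
have S1 : \sum_p \sum_q \sum_j (p == j)%:R *
     (f1 (p, q, j) (a, b, k) * (f1 (p, q, j) (a', b', k'))^*) =
     U k a * (U k a')^* * ((k == k')%:R * (b == b')%:R).
  transitivity (\sum_p \sum_q (p == k)%:R * (U p a * U q b * (U p a' * U q b')^* * (k == k')%:R)).
    apply: eq_bigr => p _; apply: eq_bigr => q _.
    transitivity (\sum_j ((p == j)%:R * (U p a * U q b * (U p a' * U q b')^* * (j == k')%:R)) * (j == k)%:R); last exact: sum_delta.
    apply: eq_bigr => j _.
    by rewrite /f1 /= !rmorphM /= conjC_nat; ring.
  under eq_bigr do rewrite -mulr_sumr.
  under eq_bigr do rewrite mulrC.
  rewrite sum_delta.
  transitivity (U k a * (U k a')^* * (k == k')%:R * \sum_q U q b * (U q b')^*).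
    by rewrite mulr_sumr; apply: eq_bigr => q _; rewrite rmorphM /=; ring.
  by rewrite (uCP _ _ UU); ring.
have S2 : \sum_p \sum_q \sum_j (q == j)%:R *
     (f1 (p, q, j) (a, b, k) * (f1 (j, p, p) (a', b', k'))^*) =
     U k' a * U k b * (U k a' * U k' b')^*.
  transitivity (\sum_p \sum_q (q == k)%:R * ((p == k')%:R * (U p a * U q b * (U k a' * U p b')^*))).
    apply: eq_bigr => p _; apply: eq_bigr => q _.
    transitivity (\sum_j ((q == j)%:R * ((p == k')%:R * (U p a * U q b * (U j a' * U p b')^*))) * (j == k)%:R); last exact: sum_delta.
    apply: eq_bigr => j _.
    by rewrite /f1 /= !rmorphM /= conjC_nat; ring.
  under eq_bigr do rewrite sum_deltaL.
  by rewrite sum_deltaL.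
rewrite S1 S2 !rmorphM /= (eq_sym k k').
have [->|h] := eqVneq k' k; first by ring.
by rewrite /= ?mulr0n; ring.
Qed.


Lemma f1_ON a1 a2 : \sum_r f1 a1 r * (f1 a2 r)^* = (a1 == a2)%:R.
Proof.
case: a1 => [[p q] j]; case: a2 => [[p' q'] j'].
rewrite (@sum3_sep _ _ _ _ 1 (fun a => U p a * (U p' a)^*)
   (fun b => U q b * (U q' b)^*) (fun k => (j == k)%:R * (j' == k)%:R)); last first.
  by move=> a b k; rewrite /f1 /= !rmorphM /= conjC_nat; ring.
by rewrite !(uON _ _ UU) sum_dd !pair_eqR (eq_sym j'); ring.
Qed.

Lemma f1_CP r c : \sum_al f1 al r * (f1 al c)^* = (r == c)%:R.
Proof.
case: r => [[a b] k]; case: c => [[a' b'] k'].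
rewrite (@sum3_sep _ _ _ _ 1 (fun p => U p a * (U p a')^*)
   (fun q => U q b * (U q b')^*) (fun j => (j == k')%:R * (j == k)%:R)); last first.
  by move=> p q j; rewrite /f1 /= !rmorphM /= conjC_nat; ring.
rewrite !(uCP _ _ UU) (sum_delta _ (fun j => (j == k')%:R)) !pair_eqR.
by rewrite (eq_sym k k'); ring.
Qed.

Lemma pi1_inv al : pi1 (pi1 al) = al.
Proof.
case: al => [[p q] j]; rewrite /pi1 /=.
have [<-|h] := eqVneq q j; first by rewrite eqxx.
by rewrite /= (negPf h).
Qed.

Lemma one_lower :
  \sum_al `|y1 al| <= trnorm (ptrans (conjop (VA_IB U) (werner d beta))).
Proof.
exact: (@struct_lower _ _ f1 (fun a => f1 (pi1 a)) y1 f1_ON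
  (comp_ON _ _ _ pi1_inv f1_ON) (comp_CP _ _ _ pi1_inv f1_CP) rep1).
Qed.

End OneSided.


Lemma sum_const_ord d (x : C) : \sum_(i < d) x = d%:R * x.
Proof. by rewrite sumr_const card_ord mulr_natl. Qed.

Lemma unitary1 d : (1%:M : 'M[C]_d) \is unitarymx.
Proof. by apply/unitarymxP; rewrite trmx1 map_mx1 mulmx1. Qed.

Section Numbers.
Variables (d : nat) (beta : C).
Hypotheses (Hd : (2 <= d)%N) (Hbr : beta \is Num.real) (Hb1 : `|beta| <= 1).
Let N := (d%:R ^+ 2 + d%:R * beta : C).

Lemma beta_ge : -1 <= beta.
Proof. exact: real_lerNnormlW. Qed.

Lemma d_ge2 : 2%:R <= d%:R :> C.
Proof. by rewrite ler_nat. Qed.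

Lemma dbeta_gt0 : 0 < d%:R + beta.
Proof.
have h1 := beta_ge; have h2 := d_ge2.
have -> : d%:R + beta = (d%:R - 2%:R) + (1 + beta) + 1 by ring.
apply: ltr_pwDr; first exact: ltr01.
apply: addr_ge0; first by rewrite subr_ge0.
by have := lerD (lexx 1) h1; rewrite subrr.
Qed.

Lemma d_gt0 : 0 < d%:R :> C.
Proof. by rewrite ltr0n; case: d Hd. Qed.

Lemma N_gt0 : 0 < N.
Proof.
have -> : N = d%:R * (d%:R + beta) by rewrite /N; ring.
by rewrite mulr_gt0 ?d_gt0 ?dbeta_gt0.
Qed.

Definition val := (d%:R * (d%:R * (1 + `|beta|) - (`|beta| - beta)) / N).

Lemma val_q : val = 1 + 2 * (`|beta| * (d%:R - 1) / (2 * (d%:R + beta))).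
Proof.
rewrite /val /N.
have h1 : d%:R + beta != 0 by rewrite gt_eqF // dbeta_gt0.
have h2 : d%:R != 0 :> C by rewrite gt_eqF // d_gt0.
have h3 : d%:R ^+ 2 + d%:R * beta != 0 by rewrite gt_eqF // N_gt0.
have h4 : 2 != 0 :> C by rewrite pnatr_eq0.
by field; rewrite ?h1 ?h2 ?h3 ?h4.
Qed.

Lemma norm_lin (x y : bool) :
  `|x%:R + beta * y%:R| = x%:R + `|beta| * y%:R - (`|beta| - beta) * (x%:R * y%:R).
Proof.
case: x; case: y => /=; rewrite ?mulr1 ?mulr0 ?add0r ?addr0 ?mul0r ?normr1 ?subr0 ?normr0 //.
- rewrite ger0_norm; first by ring.
  by have := lerD (lexx 1) beta_ge; rewrite subrr.
- by ring.
Qed.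

Lemma sum_y1 : \sum_al `|y1 d beta al| = val.
Proof.
rewrite sumT1.
transitivity (\sum_(p < d) \sum_(q < d) \sum_(j < d)
   ((p == j)%:R + `|beta| * (q == j)%:R - (`|beta| - beta) * ((p == j)%:R * (q == j)%:R)) / N).
  apply: eq_bigr => p _; apply: eq_bigr => q _; apply: eq_bigr => j _.
  rewrite /y1 /= normrM normfV (gtr0_norm N_gt0) norm_lin //.
have Sj : forall p q : 'I_d, \sum_(j < d)
   ((p == j)%:R + `|beta| * (q == j)%:R - (`|beta| - beta) * ((p == j)%:R * (q == j)%:R)) / N
   = (1 + `|beta| - (`|beta| - beta) * (q == p)%:R) / N.
  move=> p q; rewrite -big_distrl /= sumrB big_split /= -!mulr_sumr !sum_ind.
  by rewrite (sum_dd _ p q) mulr1.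
under eq_bigr do under eq_bigr do rewrite Sj.
have Sq : forall p : 'I_d, \sum_(q < d) (1 + `|beta| - (`|beta| - beta) * (q == p)%:R) / N
   = (d%:R * (1 + `|beta|) - (`|beta| - beta)) / N.
  move=> p; rewrite -big_distrl /= sumrB sum_const_ord -mulr_sumr.
  rewrite (eq_bigr (fun q => (p == q)%:R)); last by move=> q _; rewrite eq_sym.
  by rewrite sum_ind mulr1.
under eq_bigr do rewrite Sq.
by rewrite sum_const_ord /val mulrA.
Qed.

End Numbers.


Lemma f1_one d al r : f1 d (1%:M : 'M[C]_d) al r = (al == r)%:R.
Proof.
case: al => [[p q] j]; case: r => [[a b] k].
by rewrite /f1 /= !mxE !pair_eqR.
Qed.

Lemma neg_ge (t q : C) : 1 + 2 * q <= t -> q <= (t - 1) / 2.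
Proof.
move=> h.
have -> : (t - 1) / 2 = q + (t - (1 + 2 * q)) / 2.
  by field.
by rewrite -subr_ge0 addrAC subrr add0r divr_ge0 ?ler0n // subr_ge0.
Qed.

Lemma QA_part d (beta : C) : (2 <= d)%N -> beta \is Num.real -> `|beta| <= 1 ->
  QA_N_eq (werner d beta) (`|beta| * (d%:R - 1) / (2 * (d%:R + beta))).
Proof.
move=> Hd Hbr Hb1.
have E1 : trnorm (ptrans (conjop (VA_IB (1%:M : 'M[C]_d)) (werner d beta))) = val d beta.
  apply/eqP; rewrite eq_le; apply/andP; split.
    rewrite -(sum_y1 _ _ Hd Hbr Hb1).
    apply: (struct_upper _ _ (pi1 d)); first exact: pi1_inv.
    move=> r c; rewrite (rep1 _ _ _ (unitary1 d)).
    under eq_bigr do rewrite !f1_one -mulrA conjC_nat.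
    by rewrite sum_deltaL.
  by rewrite -(sum_y1 _ _ Hd Hbr Hb1); apply: one_lower; apply: unitary1.
split.
  exists 1%:M; first exact: unitary1.
  rewrite /negativity E1 val_q //.
  by field; rewrite gt_eqF // (dbeta_gt0 _ _ Hd Hbr Hb1).
move=> U UU; rewrite /negativity; apply: neg_ge.
rewrite -val_q // -(sum_y1 _ _ Hd Hbr Hb1).
exact: one_lower.
Qed.


Section TwoSided.
Variables (d : nat) (beta : C) (U U' : 'M[C]_d).
Hypotheses (UU : U \is unitarymx) (UU' : U' \is unitarymx).
Let N := (d%:R ^+ 2 + d%:R * beta : C).

Definition Amx (k n : 'I_d) : C := \sum_x (U k x)^* * U' n x.

Lemma Amx_conj m l : (Amx m l)^* = \sum_x (U' l x)^* * U m x.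
Proof.
rewrite /Amx rmorph_sum; apply: eq_bigr => x _.
by rewrite rmorphM /= conjCK mulrC.
Qed.

Lemma sigma2 a b k l a' b' m n :
  conjop (VA_VB U U') (werner d beta) ((a, b), (k, l)) ((a', b'), (m, n)) =
  U k a * U' l b * (U m a' * U' n b')^* *
  (((k == m)%:R * (l == n)%:R + beta * (Amx k n * (Amx m l)^*)) / N).
Proof.
rewrite /conjop /mulop.
under eq_bigr => x _ do rewrite wsum.
rewrite /N.
transitivity ((\sum_x VA_VB U U' ((a, b), (k, l)) x * (VA_VB U U' ((a', b'), (m, n)) x)^* +
  beta * \sum_x VA_VB U U' ((a, b), (k, l)) x * (VA_VB U U' ((a', b'), (m, n)) (x.2, x.1))^*)
  / (d%:R ^+ 2 + d%:R * beta)).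
  rewrite mulr_sumr -big_split big_distrl /=; apply: eq_bigr => x _.
  by rewrite /adjop; ring.
rewrite (@sum2_sep _ _ _ (U k a * U' l b * (U m a' * U' n b')^*)
   (fun x1 => (U k x1)^* * U m x1)
   (fun x2 => (U' l x2)^* * U' n x2)); last first.
  move=> x1 x2; rewrite /VA_VB /measV /= !rmorphM /= !conjCK; ring.
rewrite (@sum2_sep _ _ _ (U k a * U' l b * (U m a' * U' n b')^*)
   (fun x1 => (U k x1)^* * U' n x1)
   (fun x2 => (U' l x2)^* * U m x2)); last first.
  move=> x1 x2; rewrite /VA_VB /measV /= !rmorphM /= !conjCK; ring.
have E1 : \sum_x1 (U k x1)^* * U m x1 = (k == m)%:R.
  by rewrite eq_sym -(uON _ _ UU); apply: eq_bigr => x _; rewrite mulrC.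
have E2 : \sum_x1 (U' l x1)^* * U' n x1 = (l == n)%:R.
  by rewrite eq_sym -(uON _ _ UU'); apply: eq_bigr => x _; rewrite mulrC.
rewrite E1 E2 -Amx_conj.
rewrite -/(Amx k n); ring.
Qed.

Definition f2 (al r : ('I_d * 'I_d) * ('I_d * 'I_d)) : C :=
  U al.1.1 r.1.1 * U' al.1.2 r.1.2 * (al.2 == r.2)%:R.
Definition pi2 (al : ('I_d * 'I_d) * ('I_d * 'I_d)) : ('I_d * 'I_d) * ('I_d * 'I_d) :=
  (al.2, al.1).
Definition y2 (al : ('I_d * 'I_d) * ('I_d * 'I_d)) : C :=
  ((al.1 == al.2)%:R + beta * (Amx al.1.1 al.2.2 * (Amx al.2.1 al.1.2)^*)) / N.

Lemma rep2 r c :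
  ptrans (conjop (VA_VB U U') (werner d beta)) r c =
  \sum_al f2 al r * y2 al * (f2 (pi2 al) c)^*.
Proof.
case: r => [[a b] [k l]]; case: c => [[a' b'] [k' l']].
rewrite /ptrans /= sigma2 sum_pair.
transitivity (\sum_mn (U mn.1 a * U' mn.2 b * y2 (mn, (k, l)) * (U k a' * U' l b')^*)
   * (mn == (k', l'))%:R).
  by rewrite sum_delta /y2 /= pair_eqR; ring.
apply: eq_bigr => mn _.
transitivity (\sum_pq (U mn.1 a * U' mn.2 b * y2 (mn, pq) * (U pq.1 a' * U' pq.2 b')^*
   * (mn == (k', l'))%:R) * (pq == (k, l))%:R).
  by rewrite sum_delta.
apply: eq_bigr => pq _.
by rewrite /f2 /pi2 /= !rmorphM /= conjC_nat; ring.
Qed.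

Lemma f2_ON a1 a2 : \sum_r f2 a1 r * (f2 a2 r)^* = (a1 == a2)%:R.
Proof.
case: a1 => [[m n] pq]; case: a2 => [[m' n'] pq'].
rewrite (@sum2_sep _ _ _ 1 (fun ab => U m ab.1 * U' n ab.2 * (U m' ab.1 * U' n' ab.2)^*)
   (fun kl => (pq == kl)%:R * (pq' == kl)%:R)); last first.
  by move=> ab kl; rewrite /f2 /= !rmorphM /= conjC_nat; ring.
rewrite (@sum2_sep _ _ _ 1 (fun a => U m a * (U m' a)^*)
   (fun b => U' n b * (U' n' b)^*)); last first.
  by move=> a b /=; rewrite rmorphM; ring.
by rewrite (uON _ _ UU) (uON _ _ UU') sum_dd (eq_sym pq') !pair_eqR; ring.
Qed.

Lemma f2_CP r c : \sum_al f2 al r * (f2 al c)^* = (r == c)%:R.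
Proof.
case: r => [[a b] kl]; case: c => [[a' b'] kl'].
rewrite (@sum2_sep _ _ _ 1 (fun mn => U mn.1 a * U' mn.2 b * (U mn.1 a' * U' mn.2 b')^*)
   (fun pq => (pq == kl')%:R * (pq == kl)%:R)); last first.
  by move=> mn pq; rewrite /f2 /= !rmorphM /= conjC_nat; ring.
rewrite (@sum2_sep _ _ _ 1 (fun m => U m a * (U m a')^*)
   (fun n => U' n b * (U' n b')^*)); last first.
  by move=> m n /=; rewrite rmorphM; ring.
rewrite (uCP _ _ UU) (uCP _ _ UU') (sum_delta _ (fun pq => (pq == kl')%:R)) (eq_sym kl kl') !pair_eqR.
by rewrite (eq_sym kl'.1) (eq_sym kl'.2); ring.
Qed.

Lemma pi2_inv al : pi2 (pi2 al) = al.
Proof. by case: al. Qed.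

Lemma two_lower :
  \sum_al `|y2 al| <= trnorm (ptrans (conjop (VA_VB U U') (werner d beta))).
Proof.
exact: (@struct_lower _ _ f2 (fun a => f2 (pi2 a)) y2 f2_ON
  (comp_ON _ _ _ pi2_inv f2_ON) (comp_CP _ _ _ pi2_inv f2_CP) rep2).
Qed.


Lemma A_row m : \sum_n `|Amx m n| ^+ 2 = 1.
Proof.
transitivity (\sum_n \sum_x \sum_x' ((U m x)^* * U m x') * (U' n x * (U' n x')^*)).
  apply: eq_bigr => n _; rewrite normCK Amx_conj /Amx mulr_suml.
  apply: eq_bigr => x _; rewrite mulr_sumr; apply: eq_bigr => x' _; ring.
rewrite exchange_big; under eq_bigr do rewrite exchange_big.
transitivity (\sum_x \sum_x' ((U m x)^* * U m x') * (x == x')%:R).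
  apply: eq_bigr => x _; apply: eq_bigr => x' _.
  by rewrite -mulr_sumr (uCP _ _ UU').
transitivity (\sum_x (U m x)^* * U m x).
  by apply: eq_bigr => x _; rewrite sum_deltaR.
have H := uON _ _ UU m m; rewrite eqxx in H.
apply: eq_trans _ H.
by apply: eq_bigr => x _; rewrite mulrC.
Qed.

Lemma A_col n : \sum_m `|Amx m n| ^+ 2 = 1.
Proof.
transitivity (\sum_m \sum_x \sum_x' (U' n x * (U' n x')^*) * (U m x' * (U m x)^*)).
  apply: eq_bigr => m _; rewrite normCK Amx_conj /Amx mulr_suml.
  apply: eq_bigr => x _; rewrite mulr_sumr; apply: eq_bigr => x' _; ring.
rewrite exchange_big; under eq_bigr do rewrite exchange_big.
transitivity (\sum_x \sum_x' (U' n x * (U' n x')^*) * (x' == x)%:R).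
  apply: eq_bigr => x _; apply: eq_bigr => x' _.
  by rewrite -mulr_sumr (uCP _ _ UU).
under eq_bigr do rewrite sum_delta.
by rewrite (uON _ _ UU') eqxx.
Qed.

Lemma A_le1 m n : `|Amx m n| <= 1.
Proof.
rewrite -(@expr_le1 _ 2) //.
rewrite -(A_row m) (bigD1 n) //= -subr_ge0 addrAC subrr add0r.
by apply: sumr_ge0 => i _; rewrite exprn_ge0.
Qed.

Lemma A2_le1 m n : `|Amx m n| ^+ 2 <= 1.
Proof. by rewrite exprn_ile1 ?A_le1. Qed.

Lemma sq_le x : 0 <= x -> x <= 1 -> x ^+ 2 <= x :> C.
Proof.
move=> h0 h1; rewrite expr2.
by have := ler_wpM2l h0 h1; rewrite mulr1.
Qed.

Hypotheses (Hd : (2 <= d)%N) (Hbr : beta \is Num.real) (Hb1 : `|beta| <= 1).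

Definition LB (al : ('I_d * 'I_d) * ('I_d * 'I_d)) : C :=
  ((al.1 == al.2)%:R * (1 + (beta - `|beta|) * `|Amx al.1.1 al.1.2| ^+ 2) +
   `|beta| * (`|Amx al.1.1 al.2.2| ^+ 2 * `|Amx al.2.1 al.1.2| ^+ 2)) / N.

Lemma diag_ge0 (t : C) : 0 <= t -> t <= 1 -> 0 <= 1 + beta * t.
Proof.
move=> h0 h1.
have hb : `|beta * t| <= 1.
  rewrite normrM (ger0_norm h0).
  by have := ler_pM (normr_ge0 beta) h0 Hb1 h1; rewrite mulr1.
have hr : - (beta * t) \is Num.real by rewrite rpredN rpredM // ger0_real.
have := real_ler_norm hr; rewrite normrN => h.
have h2 := le_trans h hb.
have -> : 1 + beta * t = 1 - (- (beta * t)) by rewrite opprK.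
by rewrite subr_ge0.
Qed.


Let Ngt0 : 0 < N := N_gt0 _ _ Hd Hbr Hb1.

Lemma y2_diag m n :
  y2 ((m, n), (m, n)) = (1 + beta * `|Amx m n| ^+ 2) / N.
Proof. by rewrite /y2 /= eqxx normCK. Qed.

Lemma y2_off m n p q : (m, n) != (p, q) ->
  `|y2 ((m, n), (p, q))| = `|beta| * (`|Amx m q| * `|Amx p n|) / N.
Proof.
move=> h; rewrite /y2 /= (negPf h) add0r normrM normfV (gtr0_norm Ngt0).
by rewrite !normrM norm_conjC.
Qed.

Lemma LB_le al : LB al <= `|y2 al|.
Proof.
case: al => [[m n] [p q]]; rewrite /LB /=.
have [E|E] := eqVneq (m, n) (p, q).
  case: E => <- <-; rewrite y2_diag ?eqxx ?natr_true mul1r.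
  set t := `|Amx m n| ^+ 2.
  have t0 : 0 <= t by rewrite exprn_ge0.
  have t1 : t <= 1 by rewrite A2_le1.
  rewrite [`|(1 + _) / N|]ger0_norm; last by apply: divr_ge0; [exact: diag_ge0 | exact: ltW].
  rewrite ler_pM2r ?invr_gt0 // -subr_ge0.
  have -> : 1 + beta * t - (1 + (beta - `|beta|) * t + `|beta| * (t * t)) =
            `|beta| * (t - t ^+ 2) by ring.
  by rewrite mulr_ge0 // subr_ge0 sq_le.
rewrite y2_off // ?natr_false mul0r add0r ler_pM2r ?invr_gt0 //.
apply: ler_wpM2l => //.
apply: ler_pM; rewrite ?exprn_ge0 //; apply: sq_le => //; exact: A_le1.
Qed.

Lemma LB_eq : (forall m n, `|Amx m n| ^+ 2 = `|Amx m n|) ->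
  forall al, `|y2 al| = LB al.
Proof.
move=> idem [[m n] [p q]]; rewrite /LB /=.
have [E|E] := eqVneq (m, n) (p, q).
  case: E => <- <-; rewrite y2_diag ?eqxx ?natr_true mul1r.
  set t := `|Amx m n| ^+ 2.
  have tt : t * t = t by rewrite /t idem -expr2 idem.
  have t0 : 0 <= t by rewrite exprn_ge0.
  have t1 : t <= 1 by rewrite A2_le1.
  rewrite [`|(1 + _) / N|]ger0_norm; last by apply: divr_ge0; [exact: diag_ge0 | exact: ltW].
  by rewrite tt; congr (_ / _); ring.
by rewrite y2_off // ?natr_false mul0r add0r !idem.
Qed.

Lemma sumT2 (F : ('I_d * 'I_d) * ('I_d * 'I_d) -> C) :
  \sum_al F al = \sum_m \sum_n \sum_p \sum_q F ((m, n), (p, q)).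
Proof.
rewrite sum_pair (sum_pair _ _ (fun mn => \sum_pq F (mn, pq))).
apply: eq_bigr => m _; apply: eq_bigr => n _.
by rewrite sum_pair.
Qed.

Lemma sum_LB : \sum_al LB al = val d beta.
Proof.
rewrite sumT2 /LB /=.
transitivity (\sum_m \sum_n ((1 + (beta - `|beta|) * `|Amx m n| ^+ 2) + `|beta|) / N).
  apply: eq_bigr => m _; apply: eq_bigr => n _.
  under eq_bigr do rewrite -big_distrl /=.
  rewrite -big_distrl /=; congr (_ / _).
  under eq_bigr do rewrite big_split /=.
  rewrite big_split /=.
  congr (_ + _).
    by rewrite sum_pair_ind.
  transitivity (\sum_p `|beta| * `|Amx p n| ^+ 2).
    apply: eq_bigr => p _.
    rewrite -[RHS]mulr1 -(A_row m) !mulr_sumr; apply: eq_bigr => q _; ring.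
  by rewrite -mulr_sumr A_col mulr1.
under eq_bigr do rewrite -big_distrl /= big_split /= big_split /= sum_const_ord
   -mulr_sumr A_row sum_const_ord.
rewrite -big_distrl /= sum_const_ord /val.
by congr (_ / _); ring.
Qed.

End TwoSided.


Lemma f2_one d al r : f2 d (1%:M : 'M[C]_d) 1%:M al r = (al == r)%:R.
Proof.
case: al => [[p q] pq]; case: r => [[a b] kl].
by rewrite /f2 /= !mxE !pair_eqR.
Qed.

Lemma Amx_one d (m n : 'I_d) : Amx d (1%:M : 'M[C]_d) 1%:M m n = (n == m)%:R.
Proof.
rewrite /Amx -(sum_dd _ m n); apply: eq_bigr => x _.
by rewrite !mxE conjC_nat.
Qed.

Lemma QAB_part d (beta : C) : (2 <= d)%N -> beta \is Num.real -> `|beta| <= 1 ->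
  QAB_N_eq (werner d beta) (`|beta| * (d%:R - 1) / (2 * (d%:R + beta))).
Proof.
move=> Hd Hbr Hb1.
have low : forall U U' : 'M[C]_d, U \is unitarymx -> U' \is unitarymx ->
    val d beta <= trnorm (ptrans (conjop (VA_VB U U') (werner d beta))).
  move=> U U' UU UU'.
  rewrite -(sum_LB _ _ _ _ UU UU').
  apply: le_trans (two_lower _ _ _ _ UU UU').
  apply: ler_sum => al _.
  exact: (LB_le _ _ _ _ UU UU' Hd Hbr Hb1).
have E1 : trnorm (ptrans (conjop (VA_VB (1%:M : 'M[C]_d) 1%:M) (werner d beta))) = val d beta.
  apply/eqP; rewrite eq_le; apply/andP; split; last exact: low (unitary1 d) (unitary1 d).
  have idem : forall m n : 'I_d, `|Amx d (1%:M : 'M[C]_d) 1%:M m n| ^+ 2 = `|Amx d 1%:M 1%:M m n|.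
    by move=> m n; rewrite Amx_one; case: (n == m); rewrite ?normr0 ?normr1 ?expr0n ?expr1n.
  rewrite -(sum_LB _ _ _ _ (unitary1 d) (unitary1 d)).
  rewrite -(eq_bigr _ (fun al _ => LB_eq _ _ _ _ (unitary1 d) (unitary1 d) Hd Hbr Hb1 idem al)).
  apply: (struct_upper _ _ (pi2 d)); first exact: pi2_inv.
  move=> r c; rewrite (rep2 _ _ _ _ (unitary1 d) (unitary1 d)).
  under eq_bigr do rewrite !f2_one -mulrA conjC_nat.
  by rewrite sum_deltaL.
split.
  exists 1%:M, 1%:M; split; try exact: unitary1.
  rewrite /negativity E1 val_q //.
  by field; rewrite gt_eqF // (dbeta_gt0 _ _ Hd Hbr Hb1).
move=> U U' UU UU'; rewrite /negativity; apply: neg_ge.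
by rewrite -val_q //; apply: low.
Qed.

End TN.

Theorem theorem13 (C : numClosedFieldType) (d : nat) (beta : C) :
  (2 <= d)%N -> beta \is Num.real -> `|beta| <= 1 ->
  let q := `|beta| * (d%:R - 1) / (2 * (d%:R + beta)) in
  QA_N_eq (werner d beta) q /\ QAB_N_eq (werner d beta) q.
Proof.
move=> Hd Hbr Hb1 q; split.
  exact: QA_part.
exact: QAB_part.
Qed.
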